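(* There is a deterministic distributed algorithm in the LOCAL model that, on any $n$-vertex graph $G=(V,E)$ with maximum degree $\Delta$ and distinct vertex IDs in $\{1,\dots,n\}$, runs in $\log^* n+O(1)$ rounds and computes for every vertex $v$ a set $S_v\subseteq\{1,\dots,m\}$ with $m=O(\Delta^2)$ and $|S_v|\ge\Delta$, such that $S_u\cap S_v=\emptyset$ for every edge $\{u,v\}\in E$. In particular every choice of one color from each $S_v$ is a proper $O(\Delta^2)$-coloring, the solution domain has size at least $\Delta$, and the contingency factor is $O(\Delta)$.
   Context: LOCAL model: synchronous rounds, in each round every vertex can send messages of unbounded size to its neighbors; running time is the number of rounds. Solution domain size $=\min_v|S_v|$; contingency factor $=m/\min_v|S_v|$. *)

(* Defs.v *)
From mathcomp Require Import all_boot.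
Set Implicit Arguments. Unset Strict Implicit. Unset Printing Implicit Defensive.

Fixpoint tower (k : nat) : nat :=
  match k with 0 => 1 | k'.+1 => 2 ^ tower k' end.

(* log* n = least k such that k-fold iterated log_2 of n is <= 1,
   i.e. least k with n <= tower k (tower k >= k+1, so k <= n). *)
Definition log_star (n : nat) : nat :=
  find (fun k => n <= tower k) (iota 0 n.+1).

(* A deterministic algorithm in the LOCAL model (full-information form):
   each vertex holds a state of arbitrary type (unbounded message size);
   the initial state depends only on the vertex's ID; in each round every
   vertex sends its whole state to all neighbours and updates its state from
   its own state and the set of states received from its neighbours.  After
   [rounds] rounds each vertex outputs a finite list of natural numbers,
   read as the set S_v. *)
Record LocalAlg := {
  St : Type;
  init : nat -> St;
  step : St -> (St -> Prop) -> St;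
  out : St -> seq nat;
  rounds : nat }.

Fixpoint run (A : LocalAlg) (n : nat) (e : rel 'I_n) (id : 'I_n -> nat)
    (t : nat) (v : 'I_n) : St A :=
  match t with
  | 0 => @init A (id v)
  | t'.+1 => @step A (run A e id t' v)
                 (fun s => exists u, e v u /\ run A e id t' u = s)
  end.

Definition output (A : LocalAlg) (n : nat) (e : rel 'I_n) (id : 'I_n -> nat)
    (v : 'I_n) : seq nat :=
  @out A (run A e id (rounds A) v).

Definition maxdeg (n : nat) (e : rel 'I_n) : nat :=
  \max_(v : 'I_n) #|[pred u | e v u]|.

(* Main.v *)
Require Import Defs.
From mathcomp Require Import all_boot.
From mathcomp Require Import all_order all_algebra all_field zify.
From Stdlib Require Import ClassicalEpsilon.
Set Implicit Arguments. Unset Strict Implicit. Unset Printing Implicit Defensive.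
Import GRing.Theory.

Definition SysP (q d : nat) (S : nat -> seq nat) : Prop :=
  (forall c, c < q ^ d.+1 -> [/\ uniq (S c), size (S c) = q & all (fun x => x < q * q) (S c)]) /\
  (forall c c', c < q ^ d.+1 -> c' < q ^ d.+1 -> c != c' -> count (mem (S c')) (S c) <= d).

Section Sys.
Variables (F : finFieldType) (d : nat).
Let q := #|F|.
Let fT := {ffun 'I_d.+1 -> F}.
Let f0 : fT := [ffun _ => 0%R].
Definition code (c : nat) : fT := nth f0 (enum fT) c.
Definition pol (c : nat) : {poly F} := (\poly_(i < d.+1) code c (inord i))%R.
Definition enc (c : nat) (x : F) : nat := enum_rank x * q + enum_rank ((pol c).[x])%R.
Definition SF (c : nat) : seq nat := [seq enc c x | x <- enum F].

Lemma q_gt0 : 0 < q.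
Proof. by rewrite /q; apply/card_gt0P; exists 0%R. Qed.

Lemma enc_inj c c' x y : enc c x = enc c' y -> x = y /\ ((pol c).[x] = (pol c').[y])%R.
Proof.
rewrite /enc => E.
have Hq := q_gt0.
have h1 := congr1 (fun z => z %/ q) E; have h2 := congr1 (fun z => z %% q) E.
move: h1 h2 => /=; rewrite !divnMDl // !modnMDl !divn_small ?modn_small ?addn0 //;
  try exact: ltn_ord.
move=> /val_inj/enum_rank_inj -> /val_inj/enum_rank_inj ->; done.
Qed.

Lemma code_inj c c' : c < q ^ d.+1 -> c' < q ^ d.+1 -> code c = code c' -> c = c'.
Proof.
have cT : size (enum fT) = q ^ d.+1 by rewrite -cardE card_ffun card_ord.
move=> hc hc' E; apply/eqP; rewrite -(nth_uniq f0 _ _ (enum_uniq fT)) ?cT //.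
by apply/eqP.
Qed.

Lemma pol_inj c c' : c < q ^ d.+1 -> c' < q ^ d.+1 -> pol c = pol c' -> c = c'.
Proof.
move=> hc hc' E; apply: code_inj => //; apply/ffunP => i.
have := congr1 (fun p : {poly F} => (p`_i)%R) E; rewrite /pol !coef_poly ltn_ord inord_val.
done.
Qed.

Lemma SF_sys : SysP q d SF.
Proof.
have Hq := q_gt0.
split.
  move=> c hc; split.
  - rewrite map_inj_uniq ?enum_uniq //.
    by move=> x y /enc_inj [].
  - by rewrite size_map -cardT.
  - apply/allP => z /mapP [x _ ->]; rewrite /enc.
    have h1 : enum_rank x < q by apply: ltn_ord.
    have h2 : enum_rank ((pol c).[x])%R < q by apply: ltn_ord.
    move: h1 h2; set a := nat_of_ord _; set b := nat_of_ord _ => h1 h2; nia.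
move=> c c' hc hc' ncc.
rewrite count_map.
set p := (pol c - pol c')%R.
have pn0 : p != 0%R.
  rewrite /p subr_eq0; apply/eqP => E; move/negP: ncc; apply.
  by apply/eqP; apply: pol_inj.
have sp : size p <= d.+1.
  apply: leq_trans (size_polyD _ _) _; rewrite size_polyN geq_max !size_poly //.
apply: (@leq_trans (count (root p) (enum F))).
  apply: sub_count => x /= /mapP [y _ /enc_inj [Exy Ev]].
  by rewrite /root /p !hornerE Ev -Exy subrr.
rewrite -size_filter -ltnS.
apply: leq_trans sp.
apply: max_poly_roots => //.
- by apply/allP => x; rewrite mem_filter => /andP [].
- by rewrite filter_uniq ?enum_uniq.
Qed.
End Sys.

Lemma sys (k d : nat) : {S : nat -> seq nat | SysP (2 ^ k) d S}.
Proof.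
case: k => [|k].
  exists (fun _ => [:: 0]); split.
    by move=> c _; rewrite expn0.
  by move=> c c'; rewrite expn0 exp1n !ltnS !leqn0 => /eqP -> /eqP ->.
have pr2 : prime 2 by [].
case: (pPrimePowerField pr2 (ltn0Sn k)) => F _ cF.
exists (SF F d); rewrite -cF; exact: SF_sys.
Qed.
Lemma tower_gt k : k < tower k.
Proof.
elim: k => [|k IH] //=.
apply: leq_trans (ltn_expl _ (isT : 1 < 2)); by [].
Qed.

Lemma log_star_spec n : n <= tower (log_star n).
Proof.
rewrite /log_star.
set s := iota 0 n.+1; set a := fun k => n <= tower k.
have hs : has a s.
  apply/hasP; exists n; first by rewrite mem_iota; lia.
  by rewrite /a ltnW // tower_gt.
have := nth_find 0 hs; move: hs; rewrite has_find size_iota => hs.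
by rewrite /a nth_iota // add0n.
Qed.

Section Params.
Variable D : nat.
Definition LL := (trunc_log 2 D).+1.
Definition small b := b <= 4 * (LL + 3).
Definition kf b := if small b then LL + 3 else LL + (trunc_log 2 b).+1.
Definition df b := if small b then 4 else b.
Definition Bf b := 2 * kf b.

Lemma D_lt : D < 2 ^ LL.
Proof. exact: trunc_log_ltn. Qed.

Lemma params b : D * (df b).+1 <= 2 ^ kf b /\ b <= kf b * (df b).+1.
Proof.
have HD := D_lt.
rewrite /df /kf; case: ifP => hs.
  rewrite expnD; move: hs; rewrite /small => hs.
  have : 2 ^ 3 = 8 by []. move=> ->. split; lia.
have hb : b < 2 ^ (trunc_log 2 b).+1 by apply: trunc_log_ltn.
rewrite expnD; move: hb HD; set X := 2 ^ _; set Y := 2 ^ _ => hb HD.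
split; nia.
Qed.

Lemma Bstep j b : b <= 4 * tower j.+1 + 2 * LL + 6 -> Bf b <= 4 * tower j + 2 * LL + 6.
Proof.
rewrite /Bf /kf; case: ifP => hs; first lia.
move: hs; rewrite /small => /negbT; rewrite -ltnNge => hs.
rewrite [tower j.+1]/= => hb.
set T := tower j in hb *.
have hb8 : b < 2 ^ (T + 3) by rewrite expnD; move: hb hs; have : 2 ^ 3 = 8 by []; move=> ->; lia.
have hb0 : 0 < b by lia.
have h1 := trunc_logP (isT : 1 < 2) hb0.
have : 2 ^ trunc_log 2 b < 2 ^ (T + 3) by apply: leq_ltn_trans h1 hb8.
rewrite ltn_exp2l // => h2.
lia.
Qed.

Definition bs n r := iter r Bf n.

Lemma bs_bound n r : r <= log_star n -> bs n r <= 4 * tower (log_star n - r) + 2 * LL + 6.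
Proof.
elim: r => [|r IH] hr.
  rewrite subn0 /=; have := log_star_spec n; lia.
rewrite /=; apply: Bstep; have -> : (log_star n - r.+1).+1 = log_star n - r by lia.
apply: IH; lia.
Qed.

Lemma bs_final n : kf (bs n (log_star n)) = LL + 3.
Proof.
have := bs_bound (leqnn (log_star n)); rewrite subnn /= => h.
by rewrite /kf /small ifT //; lia.
Qed.
End Params.
Definition pb (P : Prop) : bool := if excluded_middle_informative P then true else false.
Lemma pbE P : pb P = true <-> P.
Proof. by rewrite /pb; case: excluded_middle_informative. Qed.

Lemma count_bad (T : eqType) (I : finType) (P : pred I) (f : I -> pred T) (a : pred T) s :
  (forall x, a x -> exists i, P i && f i x) -> count a s <= \sum_(i | P i) count (f i) s.
Proof.
move=> H; elim: s => [|x s IH] /=; first by rewrite big1.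
rewrite big_split /=; apply: leq_add => //.
case ax: (a x) => //; have [i /andP [Pi fi]] := H x ax.
by rewrite (bigD1 i) //= fi.
Qed.

Definition StT := (nat * nat * seq nat)%type.

Section Alg.
Variables (n D : nat).
Definition Sr (r : nat) : nat -> seq nat := sval (sys (kf D (bs D n r)) (df D (bs D n r))).
Lemma SrP r : SysP (2 ^ kf D (bs D n r)) (df D (bs D n r)) (Sr r).
Proof. exact: svalP. Qed.

Definition stepf (s : StT) (P : StT -> Prop) : StT :=
  let r := s.1.1 in let c := s.1.2 in
  let G := [seq x <- Sr r c | ~~ pb (exists s', P s' /\ x \in Sr r s'.1.2)] in
  (r.+1, head 0 G, map succn G).

Definition Alg : LocalAlg := {| St := StT; init := fun i => (0, i.-1, [::]);
  step := stepf; out := fun s => s.2; rounds := (log_star n).+1 |}.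
End Alg.

Definition Alg0 : LocalAlg := {| St := unit; init := fun _ => tt;
  step := fun s _ => s; out := fun _ => [::]; rounds := 0 |}.

Section Run.
Variables (n D : nat) (e : rel 'I_n) (id : 'I_n -> nat).
Hypotheses (esym : symmetric e) (eirr : irreflexive e) (emax : maxdeg e = D)
  (idinj : injective id) (idr : forall v, 1 <= id v <= n) (Dpos : 0 < D).

Local Notation R t v := (run (Alg n D) e id t v).
Definition col t v := (R t v).1.2.
Definition G t v := [seq x <- Sr n D t (col t v) | ~~ pb (exists s', (exists u, e v u /\ R t u = s') /\ x \in Sr n D t s'.1.2)].

Lemma run_round t v : (R t v).1.1 = t.
Proof. by elim: t v => [|t IH] v //=; rewrite IH. Qed.

Lemma runS t v : R t.+1 v = (t.+1, head 0 (G t v), map succn (G t v)).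
Proof. by rewrite /= /stepf run_round. Qed.

Lemma G_mem t v x : x \in G t v ->
  x \in Sr n D t (col t v) /\ forall u, e v u -> x \notin Sr n D t (col t u).
Proof.
rewrite mem_filter => /andP [/negP hp hx]; split => // u evu; apply/negP => hu.
apply: hp; apply/pbE; exists (R t u); split => //; by exists u.
Qed.

Definition Inv t := (forall v, col t v < 2 ^ bs D n t) /\ (forall u v, e u v -> col t u != col t v).

Lemma G_size t v : Inv t -> 2 ^ kf D (bs D n t) <= size (G t v) + D * df D (bs D n t).
Proof.
move=> [Hc Hp].
have [[Hs1 Hs2] [hP1 hP2]] := (SrP n D t, params D (bs D n t)).
set k := kf D _ in Hs1 Hs2 hP1 hP2 *; set d := df D _ in Hs1 Hs2 hP1 hP2 *.
have colb : forall w, col t w < (2 ^ k) ^ d.+1.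
  move=> w; apply: leq_trans (Hc w) _; rewrite -expnM leq_exp2l //.
have [_ hsz _] := Hs1 _ (colb v).
set S := Sr n D t.
pose a := fun x => pb (exists s', (exists u, e v u /\ R t u = s') /\ x \in S s'.1.2).
have -> : size (G t v) = count (predC a) (S (col t v)).
  by rewrite size_filter.
have := count_predC a (S (col t v)); rewrite hsz => <-.
rewrite addnC leq_add2l.
apply: (@leq_trans (\sum_(u | e v u) count (mem (S (col t u))) (S (col t v)))).
  apply: count_bad => x /pbE [s' [[u [evu <-]] hx]]; exists u; by rewrite evu.
apply: (@leq_trans (\sum_(u | e v u) d)).
  apply: leq_sum => u evu; apply: Hs2; rewrite ?colb //; exact: Hp.
rewrite sum_nat_const leq_mul2r; apply/orP; right.
rewrite -emax; apply: leq_trans (leq_bigmax v); by [].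
Qed.

Lemma G_pos t v : Inv t -> D <= size (G t v).
Proof.
move=> hI; have := G_size v hI; have [h1 _] := params D (bs D n t).
move: h1; set k := 2 ^ _; set d := df D _; move=> h1 h2; nia.
Qed.


Lemma G_bound t v x : Inv t -> x \in G t v -> x < 2 ^ (2 * kf D (bs D n t)).
Proof.
move=> [Hc _] /G_mem [hx _].
have [[Hs1 _] [_ _]] := (SrP n D t, params D (bs D n t)).
have colb : col t v < (2 ^ kf D (bs D n t)) ^ (df D (bs D n t)).+1.
  apply: leq_trans (Hc v) _; rewrite -expnM leq_exp2l //; by have [] := params D (bs D n t).
have [_ _ /allP ha] := Hs1 _ colb.
by rewrite mul2n -addnn expnD; apply: ha.
Qed.

Lemma G_disj t u v x : e u v -> x \in G t u -> x \in G t v -> False.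
Proof.
move=> euv /G_mem [hu _] /G_mem [_ hv].
have evu : e v u by rewrite esym.
by move: (hv u evu); rewrite hu.
Qed.

Lemma Inv0 : Inv 0.
Proof.
split.
  move=> v; rewrite /col /=; have := idr v; have := ltn_expl n (isT : 1 < 2); lia.
move=> u v euv; rewrite /col /=; apply/negP => /eqP E.
have hu := idr u; have hv := idr v.
have : id u = id v by lia.
move=> /idinj E2; move: euv; rewrite E2 eirr //.
Qed.

Lemma InvS t : Inv t -> Inv t.+1.
Proof.
move=> hI.
have hd : forall v, head 0 (G t v) \in G t v.
  move=> v; have := G_pos v hI; case: (G t v) => [|y s] /=; first by lia.
  by rewrite mem_head.
split.
  move=> v; rewrite /col runS /=; exact: G_bound (hd v).
move=> u v euv; rewrite /col !runS /=; apply/negP => /eqP E.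
have h1 := hd u; have h2 := hd v; rewrite E in h1.
exact: G_disj euv h1 h2.
Qed.

Lemma InvA t : Inv t.
Proof. elim: t => [|t IH]; [exact: Inv0 | exact: InvS]. Qed.

Lemma outputE v : output (Alg n D) e id v = map succn (G (log_star n) v).
Proof. rewrite /output; change (rounds (Alg n D)) with (log_star n).+1; by rewrite runS. Qed.


Lemma G_uniq t v : uniq (G t v).
Proof.
have [Hc _] := InvA t.
have [[Hs1 _] _] := (SrP n D t, params D (bs D n t)).
have colb : col t v < (2 ^ kf D (bs D n t)) ^ (df D (bs D n t)).+1.
  apply: leq_trans (Hc v) _; rewrite -expnM leq_exp2l //; by have [] := params D (bs D n t).
have [hu _ _] := Hs1 _ colb.
exact: filter_uniq.
Qed.

Lemma final :
  (forall v x, x \in output (Alg n D) e id v -> 1 <= x <= 2 ^ (2 * (LL D + 3))) /\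
  (forall v, D <= size (undup (output (Alg n D) e id v))) /\
  (forall u v, e u v -> forall x, x \in output (Alg n D) e id u -> x \notin output (Alg n D) e id v).
Proof.
split; [|split].
- move=> v x; rewrite outputE => /mapP [y hy ->].
  have := G_bound (InvA _) hy; rewrite bs_final => h; lia.
- move=> v.
  have hu : uniq (map succn (G (log_star n) v)).
    by rewrite (map_inj_uniq succn_inj) G_uniq.
  rewrite outputE undup_id // size_map; exact: G_pos (InvA _).
- move=> u v euv x; rewrite !outputE => /mapP [y hy ->]; apply/negP.
  rewrite mem_map; last by apply: succn_inj.
  move=> hv; exact: G_disj euv hy hv.
Qed.

End Run.

Theorem mainTheorem7 :
  exists C c : nat, forall n Delta : nat,
    exists (A : LocalAlg) (m : nat),
      m <= c * Delta ^ 2 /\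
      rounds A <= log_star n + C /\
      forall (e : rel 'I_n) (id : 'I_n -> nat),
        symmetric e -> irreflexive e -> maxdeg e = Delta ->
        injective id -> (forall v, 1 <= id v <= n) ->
        (forall v x, x \in output A e id v -> 1 <= x <= m) /\
        (forall v, Delta <= size (undup (output A e id v))) /\
        (forall u v, e u v ->
           forall x, x \in output A e id u -> x \notin output A e id v).
Proof.
exists 1, 256 => n D.
have [D0|Dpos] := posnP D.
  subst D; exists Alg0, 0; split; [by []|split; [by []|]].
  move=> e id _ _ _ _ _.
  split; [|split].
  + by move=> v x; rewrite /output /= in_nil.
  + by [].
  + by move=> u v _ x; rewrite /output /= in_nil.
exists (Alg n D), (2 ^ (2 * (LL D + 3))); split; [|split].
- have h := trunc_logP (isT : 1 < 2) Dpos.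
  rewrite /LL; move: h; set t := trunc_log 2 D => h.
  have -> : 2 * (t.+1 + 3) = 8 + t * 2 by lia.
  rewrite expnD expnM; move: h; set X := 2 ^ t => h.
  have -> : 2 ^ 8 = 256 by [].
  rewrite leq_mul2l /=; rewrite !expnS !expn0 !muln1; exact: leq_mul.
- by rewrite /= addn1.
- move=> e id he hi hm hinj hid; exact: final.
Qed.
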